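(* Let $E$ be a nondeterministic expression and $X$ a variable with $E\rhd X$ (i.e. $E\rhd\{X\}$). Then $E = E + X$ is derivable from the axiom system.
   Context: Fix a set $\mathsf{Act}$ of actions containing $\tau$ and a set $\mathsf{Var}$ of variables. Nondeterministic expressions: $E ::= 0 \mid X \mid \alpha.P \mid \mathrm{rec}\,X.E \mid E + E$; probabilistic expressions: $P ::= \partial(E) \mid P \oplus_p P$ ($0<p<1$); $\alpha.E$ abbreviates $\alpha.\partial(E)$. $\mathrm{rec}\,X$ binds $X$; $E[\vec F/\vec X]$ is capture-avoiding substitution. $\sum_{i\in I}E_i$ is an iterated $+$; $\bigoplus_{i\in I}p_iP_i$ (with $\sum p_i=1$) is an iterated $\oplus$ giving $P_i$ probability $p_i$, and $\bigoplus_ip_iE_i$ abbreviates $\bigoplus_ip_i\partial(E_i)$. Probabilistic unguardedness $E\rhd V$ ($V\subseteq\mathsf{Var}$, also for probabilistic expressions) is the least relation with: $X\rhd\{X\}$; $\tau.P\rhd V$ if $P\rhd V$; $\mathrm{rec}\,Y.E\rhd V\setminus\{Y\}$ if $E\rhd V$ and $V\ne\{Y\}$; $E+F\rhd V$ if $E\rhd V$; $E+F\rhd W$ if $F\rhd W$; $\partial(E)\rhd V$ if $E\rhd V$; $P\oplus_pQ\rhd V\cup W$ if $P\rhd V$ and $Q\rhd W$. Provable equality $=$ is the least relation on expressions (both categories) that is an equivalence, a congruence for all operators, allows renaming of bound variables, contains all instances of the axioms below, and is closed under rule R2: N1 $E+F=F+E$; N2 $E+(F+G)=(E+F)+G$;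 N3 $E+E=E$; N4 $E+0=E$; P1 $P\oplus_pQ=Q\oplus_{1-p}P$; P2 $P\oplus_p(Q\oplus_{q/(1-p)}R)=(P\oplus_{p/(p+q)}Q)\oplus_{p+q}R$; P3 $P\oplus_pP=P$; T1 $\alpha.(\partial(\tau.\partial(E))\oplus_pP)=\alpha.(\partial(E)\oplus_pP)$; T2 $\tau.\bigoplus_{i\in I}p_i(E_i+F)+F=\tau.\bigoplus_{i\in I}p_i(E_i+F)$; T3 $\tau.\bigoplus_{i}p_i(E_i+\alpha.P_i)+\alpha.\bigoplus_ip_iP_i=\tau.\bigoplus_ip_i(E_i+\alpha.P_i)$; T4 $\alpha.\bigoplus_ip_i(E_i+\tau.P_i)+\alpha.\bigoplus_ip_iP_i=\alpha.\bigoplus_ip_i(E_i+\tau.P_i)$; C $\alpha.P+\alpha.Q=\alpha.P+\alpha.(P\oplus_pQ)+\alpha.Q$; R1 $\mathrm{rec}\,X.E=E[\mathrm{rec}\,X.E/X]$; R2 if $F=E[F/X]$ and not $E\rhd\{X\}$, then $F=\mathrm{rec}\,X.E$; R3 $\mathrm{rec}\,X.(\tau.(\partial(X+E)\oplus_pP)+F)=\mathrm{rec}\,X.(\tau.(\partial(X+E)\oplus_pP)+\tau.P+F)$; R4 $\mathrm{rec}\,X.(X+E)=\mathrm{rec}\,X.E$; R5 $\mathrm{rec}\,X.(\tau.\partial(X)+E)=\mathrm{rec}\,X.\tau.\partial(E)$; R6 $\mathrm{rec}\,X.(\tau.\bigoplus_{i\in I}p_i(X+E_i)+F)=\mathrm{rec}\,X.(\tau.\partial(X)+\sum_{i\in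 I}E_i+F)$. *)

(* Defs.v *)
From Stdlib Require Import Reals List.
Import ListNotations.
Open Scope R_scope.

Set Implicit Arguments.

Section Syntax.
(* A = the set Act of actions; variables are natural numbers (an infinite set Var). *)
Variable A : Type.

Inductive nexp : Type :=
| Nil : nexp
| Var : nat -> nexp
| Pre : A -> pexp -> nexp
| Rec : nat -> nexp -> nexp
| Sum : nexp -> nexp -> nexp
with pexp : Type :=
| Dirac : nexp -> pexp
| PSum : R -> pexp -> pexp -> pexp.

Definition preE (a : A) (E : nexp) : nexp := Pre a (Dirac E).

Fixpoint wfN (E : nexp) : Prop :=
  match E with
  | Nil => True
  | Var _ => True
  | Pre _ P => wfP P
  | Rec _ E => wfN E
  | Sum E F => wfN E /\ wfN F
  end
with wfP (P : pexp) : Prop :=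
  match P with
  | Dirac E => wfN E
  | PSum p P Q => 0 < p < 1 /\ wfP P /\ wfP Q
  end.

Fixpoint freeN (x : nat) (E : nexp) : Prop :=
  match E with
  | Nil => False
  | Var y => x = y
  | Pre _ P => freeP x P
  | Rec y E => x <> y /\ freeN x E
  | Sum E F => freeN x E \/ freeN x F
  end
with freeP (x : nat) (P : pexp) : Prop :=
  match P with
  | Dirac E => freeN x E
  | PSum _ P Q => freeP x P \/ freeP x Q
  end.

(* Substitution E[G/x] of free occurrences (no renaming); it is used only
   under the side condition substOk below, which guarantees no capture. *)
Fixpoint substN (E : nexp) (x : nat) (G : nexp) : nexp :=
  match E with
  | Nil => Nil
  | Var y => if Nat.eqb x y then G else Var y
  | Pre a P => Pre a (substP P x G)
  | Rec y E' => if Nat.eqb x y then Rec y E' else Rec y (substN E' x G)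
  | Sum E F => Sum (substN E x G) (substN F x G)
  end
with substP (P : pexp) (x : nat) (G : nexp) : pexp :=
  match P with
  | Dirac E => Dirac (substN E x G)
  | PSum p P Q => PSum p (substP P x G) (substP Q x G)
  end.

(* G is substitutable for x in E: no free variable of G gets captured. *)
Fixpoint substOkN (x : nat) (G : nexp) (E : nexp) : Prop :=
  match E with
  | Nil => True
  | Var _ => True
  | Pre _ P => substOkP x G P
  | Rec y E' => x = y \/ ~ freeN x E' \/ (~ freeN y G /\ substOkN x G E')
  | Sum E F => substOkN x G E /\ substOkN x G F
  end
with substOkP (x : nat) (G : nexp) (P : pexp) : Prop :=
  match P with
  | Dirac E => substOkN x G E
  | PSum _ P Q => substOkP x G P /\ substOkP x G Q
  end.

(* Iterated probabilistic choice  ⊕_{i} p_i P_i  over a nonempty list of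
   (p_i, P_i), right-nested:  P_1 ⊕_{p_1} (P_2 ⊕_{p_2/(1-p_1)} (...)). *)
Fixpoint pbig_aux (s : R) (l : list (R * pexp)) : pexp :=
  match l with
  | [] => Dirac Nil
  | [(_, P)] => P
  | (p, P) :: l' => PSum (p / s) P (pbig_aux (s - p) l')
  end.
Definition pbig (l : list (R * pexp)) : pexp := pbig_aux 1 l.

Fixpoint nsum (l : list nexp) : nexp :=
  match l with
  | [] => Nil
  | [E] => E
  | E :: l' => Sum E (nsum l')
  end.

Definition dist {T : Type} (l : list (R * T)) : Prop :=
  l <> [] /\ Forall (fun x => 0 < fst x) l /\
  fold_right (fun x acc => fst x + acc) 0 l = 1.

Definition vset := nat -> Prop.
Definition seteq (V W : vset) : Prop := forall z, V z <-> W z.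

Variable tau : A.

(* Probabilistic unguardedness  E ▷ V  (sets of variables taken up to
   extensional equality). *)
Inductive ugN : nexp -> vset -> Prop :=
| ug_var : forall X V, seteq V (fun z => z = X) -> ugN (Var X) V
| ug_tau : forall P V, ugP P V -> ugN (Pre tau P) V
| ug_rec : forall Y E V V', ugN E V -> ~ seteq V (fun z => z = Y) ->
    seteq V' (fun z => V z /\ z <> Y) -> ugN (Rec Y E) V'
| ug_sumL : forall E F V, ugN E V -> ugN (Sum E F) V
| ug_sumR : forall E F W, ugN F W -> ugN (Sum E F) W
with ugP : pexp -> vset -> Prop :=
| ug_dirac : forall E V, ugN E V -> ugP (Dirac E) V
| ug_psum : forall p P Q V W U, ugP P V -> ugP Q W ->
    seteq U (fun z => V z \/ W z) -> ugP (PSum p P Q) U.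

Inductive eqN : nexp -> nexp -> Prop :=
| eqN_refl : forall E, wfN E -> eqN E E
| eqN_sym : forall E F, eqN E F -> eqN F E
| eqN_trans : forall E F G, eqN E F -> eqN F G -> eqN E G
| eqN_pre : forall a P P', eqP P P' -> eqN (Pre a P) (Pre a P')
| eqN_rec : forall x E E', eqN E E' -> eqN (Rec x E) (Rec x E')
| eqN_sum : forall E E' F F', eqN E E' -> eqN F F' -> eqN (Sum E F) (Sum E' F')
| eqN_alpha : forall x y E, wfN E -> ~ freeN y (Rec x E) ->
    substOkN x (Var y) E -> eqN (Rec x E) (Rec y (substN E x (Var y)))
| ax_N1 : forall E F, wfN E -> wfN F -> eqN (Sum E F) (Sum F E)
| ax_N2 : forall E F G, wfN E -> wfN F -> wfN G ->
    eqN (Sum E (Sum F G)) (Sum (Sum E F) G)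
| ax_N3 : forall E, wfN E -> eqN (Sum E E) E
| ax_N4 : forall E, wfN E -> eqN (Sum E Nil) E
| ax_T1 : forall a E p P, wfN E -> wfP P -> 0 < p < 1 ->
    eqN (Pre a (PSum p (Dirac (preE tau E)) P)) (Pre a (PSum p (Dirac E) P))
| ax_T2 : forall (l : list (R * nexp)) F, dist l -> Forall (fun x => wfN (snd x)) l ->
    wfN F ->
    eqN (Sum (Pre tau (pbig (map (fun x => (fst x, Dirac (Sum (snd x) F))) l))) F)
        (Pre tau (pbig (map (fun x => (fst x, Dirac (Sum (snd x) F))) l)))
| ax_T3 : forall a (l : list (R * (nexp * pexp))), dist l ->
    Forall (fun x => wfN (fst (snd x)) /\ wfP (snd (snd x))) l ->
    eqN (Sum (Pre tau (pbig (map (fun x => (fst x,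
                Dirac (Sum (fst (snd x)) (Pre a (snd (snd x)))))) l)))
             (Pre a (pbig (map (fun x => (fst x, snd (snd x))) l))))
        (Pre tau (pbig (map (fun x => (fst x,
                Dirac (Sum (fst (snd x)) (Pre a (snd (snd x)))))) l)))
| ax_T4 : forall a (l : list (R * (nexp * pexp))), dist l ->
    Forall (fun x => wfN (fst (snd x)) /\ wfP (snd (snd x))) l ->
    eqN (Sum (Pre a (pbig (map (fun x => (fst x,
                Dirac (Sum (fst (snd x)) (Pre tau (snd (snd x)))))) l)))
             (Pre a (pbig (map (fun x => (fst x, snd (snd x))) l))))
        (Pre a (pbig (map (fun x => (fst x,
                Dirac (Sum (fst (snd x)) (Pre tau (snd (snd x)))))) l)))
| ax_C : forall a p P Q, wfP P -> wfP Q -> 0 < p < 1 ->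
    eqN (Sum (Pre a P) (Pre a Q))
        (Sum (Sum (Pre a P) (Pre a (PSum p P Q))) (Pre a Q))
| ax_R1 : forall x E, wfN E -> substOkN x (Rec x E) E ->
    eqN (Rec x E) (substN E x (Rec x E))
| rule_R2 : forall x E F, wfN E -> wfN F -> substOkN x F E ->
    eqN F (substN E x F) -> ~ ugN E (fun z => z = x) -> eqN F (Rec x E)
| ax_R3 : forall x E p P F, wfN E -> wfP P -> wfN F -> 0 < p < 1 ->
    eqN (Rec x (Sum (Pre tau (PSum p (Dirac (Sum (Var x) E)) P)) F))
        (Rec x (Sum (Sum (Pre tau (PSum p (Dirac (Sum (Var x) E)) P)) (Pre tau P)) F))
| ax_R4 : forall x E, wfN E -> eqN (Rec x (Sum (Var x) E)) (Rec x E)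
| ax_R5 : forall x E, wfN E ->
    eqN (Rec x (Sum (preE tau (Var x)) E)) (Rec x (preE tau E))
| ax_R6 : forall x (l : list (R * nexp)) F, dist l ->
    Forall (fun y => wfN (snd y)) l -> wfN F ->
    eqN (Rec x (Sum (Pre tau (pbig (map (fun y => (fst y, Dirac (Sum (Var x) (snd y)))) l))) F))
        (Rec x (Sum (Sum (preE tau (Var x)) (nsum (map snd l))) F))
with eqP : pexp -> pexp -> Prop :=
| eqP_refl : forall P, wfP P -> eqP P P
| eqP_sym : forall P Q, eqP P Q -> eqP Q P
| eqP_trans : forall P Q S, eqP P Q -> eqP Q S -> eqP P S
| eqP_dirac : forall E E', eqN E E' -> eqP (Dirac E) (Dirac E')
| eqP_psum : forall p P P' Q Q', 0 < p < 1 -> eqP P P' -> eqP Q Q' ->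
    eqP (PSum p P Q) (PSum p P' Q')
| ax_P1 : forall p P Q, 0 < p < 1 -> wfP P -> wfP Q ->
    eqP (PSum p P Q) (PSum (1 - p) Q P)
| ax_P2 : forall p q P Q S, 0 < p -> 0 < q -> p + q < 1 -> wfP P -> wfP Q -> wfP S ->
    eqP (PSum p P (PSum (q / (1 - p)) Q S)) (PSum (p + q) (PSum (p / (p + q)) P Q) S)
| ax_P3 : forall p P, 0 < p < 1 -> wfP P -> eqP (PSum p P P) P.

End Syntax.

Arguments Nil {A}.
Arguments Var {A}.

(* Main.v *)
Require Import Defs.
From Stdlib Require Import Reals List Lra Lia Classical.
Import ListNotations.
Open Scope R_scope.

Scheme nexp_ind2 := Induction for nexp Sort Prop
  with pexp_ind2 := Induction for pexp Sort Prop.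
Combined Scheme exp_ind from nexp_ind2, pexp_ind2.

Scheme ugN_ind2 := Minimality for ugN Sort Prop
  with ugP_ind2 := Minimality for ugP Sort Prop.

Section Gen.
Variable A : Type.
Variable tau : A.

Definition sumw {T : Type} (l : list (R * T)) : R :=
  fold_right (fun x acc => fst x + acc) 0 l.
Definition pb (l : list (R * pexp A)) : pexp A := pbig_aux (sumw l) l.
Definition scale {T : Type} (c : R) (l : list (R * T)) : list (R * T) :=
  map (fun x => (c * fst x, snd x)) l.
Definition posw {T : Type} (l : list (R * T)) : Prop := Forall (fun x => 0 < fst x) l.

Lemma sumw_app {T} (l1 l2 : list (R*T)) : sumw (l1 ++ l2) = sumw l1 + sumw l2.
Proof. induction l1; simpl; [lra|]. unfold sumw in *; simpl; rewrite IHl1; lra. Qed.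

Lemma sumw_scale {T} c (l : list (R*T)) : sumw (scale c l) = c * sumw l.
Proof. induction l; unfold sumw, scale in *; simpl; [lra|]. rewrite IHl; lra. Qed.

Lemma sumw_map {T U} (f : R * T -> U) (l : list (R*T)) :
  sumw (map (fun x => (fst x, f x)) l) = sumw l.
Proof. induction l; unfold sumw in *; simpl; auto. rewrite IHl; auto. Qed.

Lemma sumw_pos {T} (l : list (R*T)) : l <> [] -> posw l -> 0 < sumw l.
Proof.
  induction l as [|x r IH]; intros Hn Hp; [congruence|].
  inversion Hp; subst. unfold sumw; simpl. fold (sumw r).
  destruct r. unfold sumw; simpl; lra.
  assert (0 < sumw (p :: r)) by (apply IH; auto; congruence). lra.
Qed.

Lemma posw_app {T} (l1 l2 : list (R*T)) : posw l1 -> posw l2 -> posw (l1 ++ l2).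
Proof. intros; apply Forall_app; auto. Qed.

Lemma posw_scale {T} c (l : list (R*T)) : 0 < c -> posw l -> posw (scale c l).
Proof. intros Hc H. unfold posw, scale. apply Forall_map. eapply Forall_impl; [|exact H].
  intros [a b]; simpl; intros; nra. Qed.

Lemma posw_map {T U} (f : R * T -> U) (l : list (R*T)) : posw l -> posw (map (fun x => (fst x, f x)) l).
Proof. intros H; unfold posw; apply Forall_map; eapply Forall_impl; [|exact H]; auto. Qed.

Lemma pb_single w (P : pexp A) : pb [(w, P)] = P.
Proof. reflexivity. Qed.

Lemma pb_cons2 w (P : pexp A) r : r <> [] ->
  pb ((w, P) :: r) = PSum (w / (w + sumw r)) P (pb r).
Proof.
  intros Hr. destruct r as [|y r']; [congruence|].
  unfold pb. change (sumw ((w, P) :: y :: r')) with (w + sumw (y :: r')).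
  change (pbig_aux (w + sumw (y :: r')) ((w, P) :: y :: r')) with
    (PSum (w / (w + sumw (y :: r'))) P (pbig_aux (w + sumw (y :: r') - w) (y :: r'))).
  replace (w + sumw (y :: r') - w) with (sumw (y :: r')) by ring.
  reflexivity.
Qed.

Lemma wfP_pb (l : list (R * pexp A)) : l <> [] -> posw l ->
  Forall (fun x => wfP (snd x)) l -> wfP (pb l).
Proof.
  induction l as [|[w P] r IH]; intros Hn Hp Hw; [congruence|].
  inversion Hp; inversion Hw; subst. simpl in *.
  destruct r as [|y r']. rewrite pb_single; auto.
  rewrite pb_cons2 by congruence. cbn [wfP].
  assert (0 < sumw (y :: r')) by (apply sumw_pos; auto; congruence).
  split; [|split; auto; apply IH; auto; congruence].
  split. apply Rdiv_lt_0_compat; lra.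
  apply (Rmult_lt_reg_r (w + sumw (y :: r'))). lra.
  unfold Rdiv. rewrite Rmult_assoc, Rinv_l by lra. lra.
Qed.

Lemma pb_scale c (l : list (R * pexp A)) : 0 < c -> posw l -> pb (scale c l) = pb l.
Proof.
  intros Hc. induction l as [|[w P] r IH]; intros Hp; [reflexivity|].
  inversion Hp; subst. simpl in *.
  destruct r as [|y r']. reflexivity.
  change (scale c ((w, P) :: y :: r')) with ((c * w, P) :: scale c (y :: r')).
  rewrite !pb_cons2 by (unfold scale; simpl; congruence).
  rewrite IH by auto. rewrite sumw_scale.
  assert (0 < sumw (y :: r')) by (apply sumw_pos; auto; congruence).
  replace (c * w / (c * w + c * sumw (y :: r'))) with (w / (w + sumw (y :: r'))).
  reflexivity. field. split; nra.
Qed.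


Definition wfl (l : list (R * pexp A)) : Prop := Forall (fun x => wfP (snd x)) l.

Lemma wfl_app l1 l2 : wfl l1 -> wfl l2 -> wfl (l1 ++ l2).
Proof. intros; apply Forall_app; auto. Qed.
Lemma wfl_scale c l : wfl l -> wfl (scale c l).
Proof. intros H; unfold wfl, scale; apply Forall_map; eapply Forall_impl; [|exact H]; auto. Qed.

Lemma P2gen a b c d p q (P Q S : pexp A) : 0 < p -> 0 < q -> p + q < 1 ->
  wfP P -> wfP Q -> wfP S -> a = p -> b = q / (1 - p) -> c = p + q -> d = p / (p + q) ->
  eqP tau (PSum a P (PSum b Q S)) (PSum c (PSum d P Q) S).
Proof. intros; subst; apply ax_P2; auto. Qed.

Lemma P1gen a b (P Q : pexp A) : 0 < a < 1 -> b = 1 - a -> wfP P -> wfP Q ->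
  eqP tau (PSum a P Q) (PSum b Q P).
Proof. intros; subst; apply ax_P1; auto. Qed.

Lemma eqP_refl' (P : pexp A) : wfP P -> eqP tau P P.
Proof. apply eqP_refl. Qed.

Lemma frac_in a b : 0 < a -> 0 < b -> 0 < a / (a + b) < 1.
Proof.
  intros. split. apply Rdiv_lt_0_compat; lra.
  apply (Rmult_lt_reg_r (a + b)). lra.
  unfold Rdiv. rewrite Rmult_assoc, Rinv_l by lra. lra.
Qed.

Lemma pb_concat l1 l2 : l1 <> [] -> l2 <> [] -> posw l1 -> posw l2 -> wfl l1 -> wfl l2 ->
  eqP tau (PSum (sumw l1 / (sumw l1 + sumw l2)) (pb l1) (pb l2)) (pb (l1 ++ l2)).
Proof.
  intros Hn1 Hn2 Hp1 Hp2 Hw1 Hw2.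
  assert (Hs2 : 0 < sumw l2) by (apply sumw_pos; auto).
  assert (Hwl2 : wfP (pb l2)) by (apply wfP_pb; auto).
  induction l1 as [|[w P] r IH]; [congruence|].
  inversion Hp1; inversion Hw1; subst. simpl in H1, H5.
  destruct r as [|y r'].
  - simpl app. rewrite pb_single, pb_cons2 by auto.
    replace (sumw [(w, P)]) with w by (unfold sumw; simpl; ring).
    try (change (sumw (@nil (R * pexp A))) with 0; rewrite Rplus_0_r).
    apply eqP_refl'. cbn [wfP]. repeat split; auto; apply frac_in; auto.
  - set (r1 := y :: r') in *.
    assert (Hr1 : r1 <> []) by (unfold r1; congruence).
    assert (Hsr : 0 < sumw r1) by (apply sumw_pos; auto).
    assert (Hwr : wfP (pb r1)) by (apply wfP_pb; auto).
    specialize (IH Hr1 H2 H6).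
    change (((w, P) :: r1) ++ l2) with ((w, P) :: (r1 ++ l2)).
    assert (Hr12 : r1 ++ l2 <> []) by (unfold r1; simpl; congruence).
    rewrite (pb_cons2 w P (r1 ++ l2)) by auto.
    rewrite (pb_cons2 w P r1) by auto.
    change (sumw ((w, P) :: r1)) with (w + sumw r1).
    rewrite sumw_app.
    set (s1 := sumw r1) in *. set (s2 := sumw l2) in *.
    apply eqP_sym.
    eapply eqP_trans.
    { apply eqP_psum. apply frac_in; lra. apply eqP_refl'; auto. apply eqP_sym; exact IH. }
    apply (P2gen _ _ _ _ (w / (w + s1 + s2)) (s1 / (w + s1 + s2))).
    all: try assumption.
    all: try (apply Rdiv_lt_0_compat; lra).
    all: try (field; lra).
    all: try (cbn [wfP]; repeat split; auto; apply frac_in; auto; fail).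
    replace (w / (w + s1 + s2) + s1 / (w + s1 + s2)) with ((w + s1) / (w + s1 + s2)) by (field; lra).
    apply frac_in; lra.
Qed.

Lemma pb_rot x r : r <> [] -> posw (x :: r) -> wfl (x :: r) ->
  eqP tau (pb (x :: r)) (pb (r ++ [x])).
Proof.
  intros Hr Hp Hw. destruct x as [w P].
  inversion Hp; inversion Hw; subst. simpl in H1, H5.
  assert (Hsr : 0 < sumw r) by (apply sumw_pos; auto).
  rewrite pb_cons2 by auto.
  eapply eqP_trans.
  { apply (P1gen _ (sumw r / (sumw r + sumw [(w, P)]))). apply frac_in; auto.
    unfold sumw at 3; simpl. field. lra. auto. apply wfP_pb; auto. }
  change P with (pb [(w, P)]) at 2.
  apply pb_concat; auto. congruence. repeat constructor; auto. repeat constructor; auto.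
Qed.


Lemma pbm_cons2 {T} (f : R * T -> pexp A) x r : r <> [] ->
  pb (map (fun x => (fst x, f x)) (x :: r)) =
  PSum (fst x / (fst x + sumw r)) (f x) (pb (map (fun x => (fst x, f x)) r)).
Proof.
  intros Hr. change (map (fun x => (fst x, f x)) (x :: r)) with
    ((fst x, f x) :: map (fun x => (fst x, f x)) r).
  rewrite pb_cons2. rewrite sumw_map. reflexivity.
  intro Hc; apply map_eq_nil in Hc; auto.
Qed.

Lemma pb_map_cong {T} (l : list (R*T)) (f g : R * T -> pexp A) : l <> [] -> posw l ->
  (forall x, In x l -> eqP tau (f x) (g x)) ->
  eqP tau (pb (map (fun x => (fst x, f x)) l)) (pb (map (fun x => (fst x, g x)) l)).
Proof.
  induction l as [|x r IH]; intros Hn Hp Hfg; [congruence|].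
  inversion Hp; subst.
  destruct r as [|y r'].
  - simpl map. rewrite !pb_single. apply Hfg; simpl; auto.
  - rewrite (pbm_cons2 f) by congruence. rewrite (pbm_cons2 g) by congruence.
    assert (0 < sumw (y :: r')) by (apply sumw_pos; auto; congruence).
    apply eqP_psum. apply frac_in; auto.
    apply Hfg; simpl; auto.
    apply IH; auto. congruence. intros; apply Hfg; simpl; auto.
Qed.

Definition goodl (L : list (R * pexp A)) : Prop :=
  L <> [] /\ posw L /\ sumw L = 1 /\ wfl L.

Lemma flat_props (l : list (R * list (R * pexp A))) :
  Forall (fun x => goodl (snd x)) l -> posw l ->
  sumw (flat_map (fun x => scale (fst x) (snd x)) l) = sumw l /\
  posw (flat_map (fun x => scale (fst x) (snd x)) l) /\
  wfl (flat_map (fun x => scale (fst x) (snd x)) l) /\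
  (l <> [] -> flat_map (fun x => scale (fst x) (snd x)) l <> []).
Proof.
  induction l as [|x r IH]; intros Hg Hp; simpl.
  - unfold posw, wfl; repeat split; auto.
  - inversion Hg; inversion Hp; subst. destruct H1 as (Hn & Hpo & Hs & Hw).
    destruct (IH H2 H6) as (S1 & S2 & S3 & S4).
    rewrite sumw_app, sumw_scale, S1, Hs.
    repeat split.
    + change (sumw (x :: r)) with (fst x + sumw r). ring.
    + apply posw_app; auto. apply posw_scale; auto.
    + apply wfl_app; auto. apply wfl_scale; auto.
    + intros _ Hc. apply app_eq_nil in Hc. destruct Hc as [Hc _].
      unfold scale in Hc. apply map_eq_nil in Hc. auto.
Qed.

Lemma pb_nested (l : list (R * list (R * pexp A))) : l <> [] -> posw l ->
  Forall (fun x => goodl (snd x)) l ->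
  eqP tau (pb (map (fun x => (fst x, pb (snd x))) l))
          (pb (flat_map (fun x => scale (fst x) (snd x)) l)).
Proof.
  induction l as [|x r IH]; intros Hn Hp Hg; [congruence|].
  inversion Hp; inversion Hg; subst. destruct H5 as (Hn1 & Hpo & Hs & Hw).
  destruct x as [w L]; simpl in H1, Hn1, Hpo, Hs, Hw.
  destruct r as [|y r'].
  - simpl. rewrite app_nil_r, pb_single, pb_scale by auto.
    apply eqP_refl', wfP_pb; auto.
  - rewrite (pbm_cons2 (fun x => pb (snd x)) (w, L)) by congruence. simpl fst; simpl snd.
    assert (Hr : y :: r' <> []) by congruence.
    destruct (flat_props _ H6 H2) as (S1 & S2 & S3 & S4).
    specialize (S4 Hr).
    assert (0 < sumw (y :: r')) by (apply sumw_pos; auto).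
    eapply eqP_trans.
    { apply eqP_psum. apply frac_in; auto. apply eqP_refl', wfP_pb; auto.
      apply IH; auto. }
    rewrite <- (pb_scale w L) by auto.
    change (flat_map (fun x => scale (fst x) (snd x)) ((w, L) :: y :: r'))
      with (scale w L ++ flat_map (fun x => scale (fst x) (snd x)) (y :: r')).
    replace (w / (w + sumw (y :: r'))) with
      (sumw (scale w L) / (sumw (scale w L) + sumw (flat_map (fun x => scale (fst x) (snd x)) (y :: r')))).
    apply pb_concat; auto.
    + unfold scale; intro Hc; apply map_eq_nil in Hc; auto.
    + apply posw_scale; auto.
    + apply wfl_scale; auto.
    + rewrite sumw_scale, Hs, S1. f_equal; ring.
Qed.

Lemma T1single a (E : nexp A) : wfN E ->
  eqN tau (Pre a (Dirac E)) (Pre a (Dirac (preE tau E))).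
Proof.
  intros HE.
  assert (Hh : 0 < /2 < 1) by lra.
  assert (Hw1 : wfP (Dirac E)) by exact HE.
  assert (Hw2 : wfP (Dirac (preE tau E))) by exact HE.
  eapply eqN_trans. apply eqN_pre. apply eqP_sym. apply ax_P3 with (p := /2); auto.
  eapply eqN_trans. apply eqN_sym. apply ax_T1; auto.
  eapply eqN_trans. apply eqN_pre. apply (P1gen (/2) (/2)); auto. field.
  eapply eqN_trans. apply eqN_sym. apply ax_T1; auto.
  apply eqN_pre. apply ax_P3; auto.
Qed.

Lemma T1all {T} a (g : R * T -> nexp A) : forall (u : list (R*T)) (d : list (R * pexp A)),
  map (fun x => (fst x, Dirac (g x))) u ++ d <> [] -> posw u -> posw d ->
  (forall x, In x u -> wfN (g x)) -> wfl d ->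
  eqN tau (Pre a (pb (map (fun x => (fst x, Dirac (g x))) u ++ d)))
          (Pre a (pb (d ++ map (fun x => (fst x, Dirac (preE tau (g x)))) u))).
Proof.
  induction u as [|x u' IH]; intros d Hn Hpu Hpd Hwu Hwd.
  - simpl in *. rewrite app_nil_r. apply eqN_refl. simpl. apply wfP_pb; auto.
  - inversion Hpu; subst.
    destruct (map (fun x => (fst x, Dirac (g x))) u' ++ d) as [|z rest] eqn:Hrest.
    + apply app_eq_nil in Hrest. destruct Hrest as [Hu1 Hu2]. subst d.
      apply map_eq_nil in Hu1. subst u'. simpl.
      rewrite !pb_single. apply T1single. apply Hwu; simpl; auto.
    + simpl map. rewrite <- app_comm_cons, Hrest.
      assert (Hr : z :: rest <> []) by congruence.
      assert (Hwrest : wfl (z :: rest)).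
      { rewrite <- Hrest. apply wfl_app; auto. unfold wfl. apply Forall_map.
        apply Forall_forall. intros y Hy. apply Hwu; simpl; auto. }
      assert (Hprest : posw (z :: rest)).
      { rewrite <- Hrest. apply posw_app; auto. apply posw_map; auto. }
      assert (Hsr : 0 < sumw (z :: rest)) by (apply sumw_pos; auto).
      assert (Hgx : wfN (g x)) by (apply Hwu; simpl; auto).
      rewrite pb_cons2 by auto.
      eapply eqN_trans. apply eqN_sym. apply ax_T1; auto. apply wfP_pb; auto. apply frac_in; auto.
      rewrite <- pb_cons2 by auto.
      eapply eqN_trans. apply eqN_pre. apply pb_rot; auto.
      constructor; auto. constructor; auto.
      rewrite <- Hrest, <- app_assoc.
      eapply eqN_trans. apply IH; auto.
      rewrite app_assoc. intro Hc; apply (f_equal (@length _)) in Hc; rewrite ?length_app in Hc; simpl in Hc; lia.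
      apply posw_app; auto. unfold posw; repeat constructor; auto.
      intros; apply Hwu; simpl; auto.
      apply wfl_app; auto. unfold wfl; repeat constructor; auto.
      rewrite <- app_assoc. simpl. apply eqN_refl. simpl.
      apply wfP_pb.
      intro Hc; apply (f_equal (@length _)) in Hc; rewrite ?length_app in Hc; simpl in Hc; lia.
      apply posw_app; auto. unfold posw; constructor; auto. apply posw_map; auto.
      apply wfl_app; auto. unfold wfl; constructor; auto. apply Forall_map.
      apply Forall_forall. intros y Hy. apply Hwu; simpl; auto.
Qed.


Fixpoint allvN (E : nexp A) : list nat :=
  match E with
  | Nil => [] | Var y => [y] | Pre _ P => allvP P
  | Rec y E => y :: allvN E | Sum E F => allvN E ++ allvN F
  end
with allvP (P : pexp A) : list nat :=
  match P with Dirac E => allvN E | PSum _ P Q => allvP P ++ allvP Q end.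

Fixpoint bvN (y : nat) (E : nexp A) : Prop :=
  match E with
  | Nil => False | Var _ => False | Pre _ P => bvP y P
  | Rec z E => y = z \/ bvN y E | Sum E F => bvN y E \/ bvN y F
  end
with bvP (y : nat) (P : pexp A) : Prop :=
  match P with Dirac E => bvN y E | PSum _ P Q => bvP y P \/ bvP y Q end.

Definition fresh (l : list nat) : nat := S (list_max l).

Lemma fresh_notin l : ~ In (fresh l) l.
Proof.
  intro H. assert (Hf : Forall (fun k => (k <= list_max l)%nat) l) by (apply list_max_le; lia).
  rewrite Forall_forall in Hf. specialize (Hf _ H). unfold fresh in Hf. lia.
Qed.

Fixpoint renN (S : list nat) (E : nexp A) : nexp A :=
  match E with
  | Nil => Nil | Var y => Var y | Pre a P => Pre a (renP S P)
  | Rec z E => let E' := renN S E in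
               let w := fresh (S ++ allvN E') in Rec w (substN E' z (Var w))
  | Sum E F => Sum (renN S E) (renN S F)
  end
with renP (S : list nat) (P : pexp A) : pexp A :=
  match P with Dirac E => Dirac (renN S E) | PSum p P Q => PSum p (renP S P) (renP S Q) end.

Lemma free_allv : (forall (E : nexp A) y, freeN y E -> In y (allvN E)) /\
                  (forall (P : pexp A) y, freeP y P -> In y (allvP P)).
Proof.
  apply exp_ind; simpl; intros.
  - tauto.
  - left; congruence.
  - eauto.
  - right; apply H; tauto.
  - apply in_or_app. destruct H1; [left|right]; eauto.
  - eauto.
  - apply in_or_app. destruct H1; [left|right]; eauto.
Qed.

Lemma bv_allv : (forall (E : nexp A) y, bvN y E -> In y (allvN E)) /\
                (forall (P : pexp A) y, bvP y P -> In y (allvP P)).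
Proof.
  apply exp_ind; simpl; intros.
  - tauto.
  - tauto.
  - eauto.
  - destruct H0; [left; auto | right; auto].
  - apply in_or_app. destruct H1; [left|right]; eauto.
  - eauto.
  - apply in_or_app. destruct H1; [left|right]; eauto.
Qed.

Lemma bv_subst : (forall (E : nexp A) y x w, bvN y (substN E x (Var w)) -> bvN y E) /\
                 (forall (P : pexp A) y x w, bvP y (substP P x (Var w)) -> bvP y P).
Proof.
  apply exp_ind; simpl; intros.
  - tauto.
  - destruct (Nat.eqb x n); simpl in H; tauto.
  - eauto.
  - destruct (Nat.eqb x n); simpl in H0; [tauto|]. destruct H0; [left; auto | right; eauto].
  - destruct H1; [left|right]; eauto.
  - eauto.
  - destruct H1; [left|right]; eauto.
Qed.

Lemma free_subst : (forall (E : nexp A) y x G, freeN y (substN E x G) -> (freeN y E /\ y <> x) \/ freeN y G) /\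
                   (forall (P : pexp A) y x G, freeP y (substP P x G) -> (freeP y P /\ y <> x) \/ freeN y G).
Proof.
  apply exp_ind; simpl; intros.
  - tauto.
  - destruct (Nat.eqb x n) eqn:Hx; [right; auto|].
    simpl in H. left; split; auto. apply Nat.eqb_neq in Hx. congruence.
  - eauto.
  - destruct (Nat.eqb x n) eqn:Hx.
    + apply Nat.eqb_eq in Hx. subst. simpl in H0. left; split; [auto|tauto].
    + simpl in H0. destruct H0 as [H1 H2]. destruct (H _ _ _ H2) as [[H3 H4]|H3]; [left|right]; tauto.
  - destruct H1 as [H1|H1]; [destruct (H _ _ _ H1)|destruct (H0 _ _ _ H1)]; tauto.
  - eauto.
  - destruct H1 as [H1|H1]; [destruct (H _ _ _ H1)|destruct (H0 _ _ _ H1)]; tauto.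
Qed.

Lemma ok_of_bv : (forall (E : nexp A) x G, (forall y, bvN y E -> ~ freeN y G) -> substOkN x G E) /\
                 (forall (P : pexp A) x G, (forall y, bvP y P -> ~ freeN y G) -> substOkP x G P).
Proof.
  apply exp_ind; simpl; intros.
  - exact I.
  - exact I.
  - apply H; auto.
  - right; right. split; [apply H0; left; auto | apply H; intros; apply H0; right; auto].
  - split; [apply H; intros; apply H1; left; auto | apply H0; intros; apply H1; right; auto].
  - apply H; auto.
  - split; [apply H; intros; apply H1; left; auto | apply H0; intros; apply H1; right; auto].
Qed.

Lemma wf_subst : (forall (E : nexp A) x G, wfN E -> wfN G -> wfN (substN E x G)) /\
                 (forall (P : pexp A) x G, wfP P -> wfN G -> wfP (substP P x G)).
Proof.
  apply exp_ind; simpl; intros.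
  - exact I.
  - destruct (Nat.eqb x n); simpl; auto.
  - apply H; auto.
  - destruct (Nat.eqb x n); simpl; auto.
  - destruct H1; split; auto.
  - apply H; auto.
  - destruct H1 as (? & ? & ?); repeat split; auto; lra.
Qed.

Lemma ren_props : (forall (E : nexp A) S, wfN E -> wfN (renN S E) /\ eqN tau E (renN S E) /\
                     (forall y, bvN y (renN S E) -> ~ In y S) /\
                     (forall y, freeN y (renN S E) -> freeN y E)) /\
                  (forall (P : pexp A) S, wfP P -> wfP (renP S P) /\ eqP tau P (renP S P) /\
                     (forall y, bvP y (renP S P) -> ~ In y S) /\
                     (forall y, freeP y (renP S P) -> freeP y P)).
Proof.
  apply exp_ind; simpl; intros.
  - repeat split; auto. apply eqN_refl; exact I.
  - repeat split; auto. apply eqN_refl; exact I.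
  - destruct (H S H0) as (W1 & W2 & W3 & W4). repeat split; auto.
    apply eqN_pre; auto.
  - destruct (H S H0) as (W1 & W2 & W3 & W4).
    set (E' := renN S n0) in *.
    set (w := fresh (S ++ allvN E')).
    assert (Hw : ~ In w (S ++ allvN E')) by apply fresh_notin.
    assert (HwS : ~ In w S) by (intro; apply Hw; apply in_or_app; auto).
    assert (HwE : ~ In w (allvN E')) by (intro; apply Hw; apply in_or_app; auto).
    split; [|split; [|split]].
    + apply (proj1 wf_subst); simpl; auto.
    + eapply eqN_trans. apply eqN_rec; eauto.
      apply eqN_alpha; auto.
      * simpl. intros [_ Hf]. apply HwE. apply (proj1 free_allv); auto.
      * apply (proj1 ok_of_bv). simpl. intros y Hy Heq. subst y.
        apply HwE. apply (proj1 bv_allv); auto.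
    + intros y0 [Hy|Hy]. subst; auto. apply W3. eapply (proj1 bv_subst); eauto.
    + intros y0 [Hy1 Hy2]. apply (proj1 free_subst) in Hy2. simpl in Hy2.
      destruct Hy2 as [[Hy2 Hy3]|Hy2]; [|congruence]. split; auto.
  - destruct H1 as [H1 H2]. destruct (H S H1) as (W1 & W2 & W3 & W4).
    destruct (H0 S H2) as (V1 & V2 & V3 & V4). repeat split; auto.
    + apply eqN_sum; auto.
    + intros y [Hy|Hy]; eauto.
    + intros y [Hy|Hy]; [left|right]; eauto.
  - destruct (H S H0) as (W1 & W2 & W3 & W4). repeat split; auto.
    apply eqP_dirac; auto.
  - destruct H1 as (Hr & H1 & H2). destruct (H S H1) as (W1 & W2 & W3 & W4).
    destruct (H0 S H2) as (V1 & V2 & V3 & V4). repeat split; auto; try lra.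
    + apply eqP_psum; auto.
    + intros y [Hy|Hy]; eauto.
    + intros y [Hy|Hy]; [left|right]; eauto.
Qed.


Lemma pbaux_hom (phi : pexp A -> pexp A)
  (Hphi : forall p P Q, phi (PSum p P Q) = PSum p (phi P) (phi Q)) :
  forall l s, l <> [] ->
  phi (pbig_aux s l) = pbig_aux s (map (fun x => (fst x, phi (snd x))) l).
Proof.
  induction l as [|[w P] r IH]; intros s Hn; [congruence|].
  destruct r as [|y r']. reflexivity.
  change (pbig_aux s ((w, P) :: y :: r')) with (PSum (w / s) P (pbig_aux (s - w) (y :: r'))).
  rewrite Hphi, IH by congruence.
  reflexivity.
Qed.

Lemma pb_hom (phi : pexp A -> pexp A)
  (Hphi : forall p P Q, phi (PSum p P Q) = PSum p (phi P) (phi Q)) l : l <> [] ->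
  phi (pb l) = pb (map (fun x => (fst x, phi (snd x))) l).
Proof.
  intros Hn. unfold pb. rewrite pbaux_hom by auto.
  rewrite (sumw_map (fun x => phi (snd x))). reflexivity.
Qed.

Definition mkQ (x : R * (nat * nexp A)) : pexp A := Dirac (Sum (Var (fst (snd x))) (snd (snd x))).
Definition pbQ (Q : list (R * (nat * nexp A))) : pexp A := pb (map (fun x => (fst x, mkQ x)) Q).
Definition wfQ (Q : list (R * (nat * nexp A))) : Prop := Forall (fun x => wfN (snd (snd x))) Q.
Definition validQ (Q : list (R * (nat * nexp A))) : Prop :=
  Q <> [] /\ posw Q /\ sumw Q = 1 /\ wfQ Q.
Definition headIn (z : nat) (Q : list (R * (nat * nexp A))) : Prop :=
  Exists (fun x => fst (snd x) = z) Q.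

Lemma wfl_mapQ Q : wfQ Q -> wfl (map (fun x => (fst x, mkQ x)) Q).
Proof.
  intros H. unfold wfl. apply Forall_map. eapply Forall_impl; [|exact H].
  intros x Hx. simpl. split; auto; exact I.
Qed.

Lemma wfP_pbQ Q : Q <> [] -> posw Q -> wfQ Q -> wfP (pbQ Q).
Proof.
  intros. apply wfP_pb. intro Hc; apply map_eq_nil in Hc; auto.
  apply posw_map; auto. apply wfl_mapQ; auto.
Qed.

Lemma wfQ_app Q1 Q2 : wfQ Q1 -> wfQ Q2 -> wfQ (Q1 ++ Q2).
Proof. intros; apply Forall_app; auto. Qed.

Lemma sum_swap (a b c : nexp A) : wfN a -> wfN b -> wfN c ->
  eqN tau (Sum (Sum a b) c) (Sum b (Sum a c)).
Proof.
  intros. eapply eqN_trans. apply eqN_sum. apply ax_N1; auto. apply eqN_refl; auto.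
  apply eqN_sym. apply ax_N2; auto.
Qed.

Definition nonYb (Y : nat) (x : R * (nat * nexp A)) : bool := negb (Nat.eqb (fst (snd x)) Y).

Lemma prune Y : forall u d (B : nexp A),
  posw (u ++ d) -> wfQ (u ++ d) -> wfN B -> d ++ filter (nonYb Y) u <> [] ->
  exists B', wfN B' /\
    eqN tau (Rec Y (Sum (Pre tau (pbQ (u ++ d))) B))
            (Rec Y (Sum (Pre tau (pbQ (d ++ filter (nonYb Y) u))) B')).
Proof.
  induction u as [|x u' IH]; intros d B Hp Hw HB Hn.
  - exists B. split; auto. simpl. rewrite app_nil_r. apply eqN_refl. simpl. split; auto.
    simpl in Hn; rewrite app_nil_r in Hn. apply wfP_pbQ; auto.
  - destruct (u' ++ d) as [|z rest] eqn:Hud.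
    + apply app_eq_nil in Hud. destruct Hud; subst. simpl in *.
      destruct (nonYb Y x) eqn:Hx; [|congruence].
      exists B. split; auto. apply eqN_refl. simpl. inversion Hw; subst. repeat split; auto.
    + assert (Hr : z :: rest <> []) by congruence.
      change ((x :: u') ++ d) with (x :: (u' ++ d)) in *. rewrite Hud in *.
      inversion Hp; inversion Hw; subst.
      assert (Hwr : wfP (pbQ (z :: rest))) by (apply wfP_pbQ; auto).
      assert (Hsr : 0 < sumw (z :: rest)) by (apply sumw_pos; auto).
      unfold pbQ at 1. rewrite (pbm_cons2 mkQ) by auto. fold (pbQ (z :: rest)).
      assert (Hc : 0 < fst x / (fst x + sumw (z :: rest)) < 1) by (apply frac_in; auto).
      destruct (nonYb Y x) eqn:Hx; simpl filter.
      * rewrite Hx.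
        rewrite <- (pbm_cons2 mkQ) by auto. fold (pbQ (x :: z :: rest)).
        destruct (IH (d ++ [x]) B) as (B' & HB' & Heq); auto.
        { rewrite app_assoc, Hud. apply posw_app; auto. unfold posw; repeat constructor; auto. }
        { rewrite app_assoc, Hud. apply wfQ_app; auto. unfold wfQ; repeat constructor; auto. }
        { intro Hc'. apply (f_equal (@length _)) in Hc'. rewrite ?length_app in Hc'. simpl in Hc'. lia. }
        exists B'. split; auto.
        assert (Hrot : eqP tau (pbQ (x :: z :: rest)) (pbQ ((z :: rest) ++ [x]))).
        { unfold pbQ. rewrite map_app.
          apply (pb_rot (fst x, mkQ x) (map (fun y => (fst y, mkQ y)) (z :: rest))).
          intro Hc'; discriminate. apply (posw_map mkQ (x :: z :: rest)); auto.
          apply (wfl_mapQ (x :: z :: rest)); auto. }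
        eapply eqN_trans.
        { apply eqN_rec. apply eqN_sum. apply eqN_pre. exact Hrot.
          apply eqN_refl; auto. }
        rewrite <- Hud, <- app_assoc.
        rewrite <- app_assoc in Heq. exact Heq.
      * rewrite Hx.
        unfold nonYb in Hx. apply Bool.negb_false_iff, Nat.eqb_eq in Hx.
        unfold mkQ at 1. rewrite Hx.
        set (T1 := Pre tau (PSum (fst x / (fst x + sumw (z :: rest)))
                     (Dirac (Sum (Var Y) (snd (snd x)))) (pbQ (z :: rest)))).
        assert (HT1 : wfN T1) by (unfold T1; cbn [wfN wfP]; destruct Hc; repeat split; auto; lra).
        assert (Hc1 : posw (u' ++ d)) by (rewrite Hud; auto).
        assert (Hc2 : wfQ (u' ++ d)) by (rewrite Hud; auto).
        assert (Hc3 : wfN (Sum T1 B)) by (split; auto).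
        assert (Hc4 : d ++ filter (nonYb Y) u' <> []).
        { simpl in Hn. unfold nonYb in Hn at 1. rewrite Hx, Nat.eqb_refl in Hn. exact Hn. }
        destruct (IH d (Sum T1 B) Hc1 Hc2 Hc3 Hc4) as (B' & HB' & Heq).
        exists B'. split; auto.
        eapply eqN_trans. apply ax_R3; auto.
        eapply eqN_trans. apply eqN_rec. apply sum_swap; auto.
        rewrite Hud in Heq. exact Heq.
Qed.


Lemma absorb (H K T : nexp A) : eqN tau H (Sum K T) -> wfN K -> wfN T -> eqN tau H (Sum H T).
Proof.
  intros He HK HT.
  eapply eqN_trans. exact He.
  eapply eqN_trans. apply eqN_sum. apply eqN_refl; auto. apply eqN_sym, ax_N3; auto.
  eapply eqN_trans. apply ax_N2; auto.
  apply eqN_sum. apply eqN_sym; auto. apply eqN_refl; auto.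
Qed.

Lemma add_sumL (E G T : nexp A) : eqN tau E (Sum E T) -> wfN E -> wfN G -> wfN T ->
  eqN tau (Sum E G) (Sum (Sum E G) T).
Proof.
  intros He HE HG HT.
  eapply eqN_trans. apply eqN_sum. exact He. apply eqN_refl; auto.
  eapply eqN_trans. apply eqN_sym, ax_N2; auto.
  eapply eqN_trans. apply eqN_sum. apply eqN_refl; auto. apply ax_N1; auto.
  apply ax_N2; auto.
Qed.

Lemma add_sumR (E G T : nexp A) : eqN tau G (Sum G T) -> wfN E -> wfN G -> wfN T ->
  eqN tau (Sum E G) (Sum (Sum E G) T).
Proof.
  intros He HE HG HT.
  eapply eqN_trans. apply eqN_sum. apply eqN_refl; auto. exact He.
  apply ax_N2; auto.
Qed.

Lemma pbig_pb (l : list (R * pexp A)) : sumw l = 1 -> pbig l = pb l.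
Proof. intros H. unfold pbig, pb. rewrite H. reflexivity. Qed.

Lemma map_scale {T U} (f : R * T -> U) c (l : list (R * T)) :
  (forall x, f (c * fst x, snd x) = f x) ->
  map (fun x => (fst x, f x)) (scale c l) = scale c (map (fun x => (fst x, f x)) l).
Proof.
  intros Hf. induction l as [|x r IH]; [reflexivity|].
  simpl. rewrite IH, Hf. reflexivity.
Qed.

Lemma headIn_map z (f : R * (nat * nexp A) -> R) (g : R * (nat * nexp A) -> nexp A) Q :
  headIn z (map (fun x => (f x, (fst (snd x), g x))) Q) <-> headIn z Q.
Proof.
  unfold headIn. rewrite Exists_map. simpl. reflexivity.
Qed.

Lemma headIn_scale z c Q : headIn z (scale c Q) <-> headIn z Q.
Proof.
  unfold scale. 
  replace (map (fun x : R * (nat * nexp A) => (c * fst x, snd x)) Q) with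
      (map (fun x : R * (nat * nexp A) => (c * fst x, (fst (snd x), snd (snd x)))) Q).
    apply headIn_map. apply map_ext. intros [a [b e]]; reflexivity.
Qed.

Definition NP (e : nexp A) (Q : list (R * (nat * nexp A))) : Prop :=
  eqN tau (preE tau e) (Sum (preE tau e) (Pre tau (pbQ Q))).

Definition MotN (E : nexp A) (V : vset) : Prop :=
  wfN E ->
  (exists Z, seteq V (fun z => z = Z) /\ eqN tau E (Sum E (Var Z))) \/
  (exists Q, validQ Q /\ (forall z, V z <-> headIn z Q) /\ eqN tau E (Sum E (Pre tau (pbQ Q)))).

Local Notation LT := (R * (nexp A * list (R * (nat * nexp A))))%type.

Definition leafOK (V : vset) (x : LT) : Prop :=
  wfN (fst (snd x)) /\ validQ (snd (snd x)) /\ (forall z, headIn z (snd (snd x)) -> V z) /\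
  NP (fst (snd x)) (snd (snd x)).

Definition MotP (P : pexp A) (V : vset) : Prop :=
  wfP P -> exists l : list LT, l <> [] /\ posw l /\ sumw l = 1 /\
    eqP tau P (pb (map (fun x => (fst x, Dirac (fst (snd x)))) l)) /\
    Forall (leafOK V) l /\
    (forall z, V z -> Exists (fun x => headIn z (snd (snd x))) l).

Lemma wfT (Q : list (R * (nat * nexp A))) : validQ Q -> wfN (Pre tau (pbQ Q)).
Proof. intros (H1 & H2 & H3 & H4). simpl. apply wfP_pbQ; auto. Qed.

Lemma M_to_N E V : wfN E ->
  ((exists Z, seteq V (fun z => z = Z) /\ eqN tau E (Sum E (Var Z))) \/
   (exists Q, validQ Q /\ (forall z, V z <-> headIn z Q) /\ eqN tau E (Sum E (Pre tau (pbQ Q))))) ->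
  exists Q, validQ Q /\ (forall z, V z <-> headIn z Q) /\ NP E Q.
Proof.
  intros HE [(Z & HV & He) | (Q & HQ & HV & He)].
  - exists [(1, (Z, E))]. split; [|split].
    + unfold validQ, posw, wfQ.
      split; [congruence | split; [repeat constructor; simpl; lra | split; [unfold sumw; simpl; lra | repeat constructor; simpl; auto]]].
    + intros z. rewrite (HV z). unfold headIn. split.
      * intros ->. constructor. reflexivity.
      * intros Hx. inversion Hx; subst; simpl in *; auto. inversion H0.
    + unfold NP. change (pbQ [(1, (Z, E))]) with (Dirac (Sum (Var Z) E)).
      apply eqN_sym.
      assert (Hw : wfN (preE tau E)) by exact HE.
      eapply eqN_trans. apply eqN_sum. apply eqN_refl; auto.
      apply eqN_pre, eqP_dirac, ax_N1; simpl; auto.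
      eapply eqN_trans. apply eqN_sum. apply eqN_refl; auto.
      apply eqN_pre, eqP_dirac, eqN_sym, He.
      apply ax_N3; auto.
  - exists Q. split; [auto|split; [auto|]].
    unfold NP. set (T := Pre tau (pbQ Q)).
    assert (HT : wfN T) by (apply wfT; auto).
    assert (H1 : eqN tau (preE tau E) (Pre tau (Dirac (Sum E T)))) by (apply eqN_pre, eqP_dirac, He).
    assert (H2 : eqN tau (Sum (Pre tau (Dirac (Sum E T))) T) (Pre tau (Dirac (Sum E T)))).
    { pose proof (ax_T2 tau (l := [(1, E)]) T) as H. simpl in H. apply H.
      unfold Defs.dist. split; [congruence | split; [repeat constructor; simpl; lra | simpl; lra]].
      repeat constructor; auto. auto. }
    eapply eqN_trans. exact H1.
    eapply eqN_trans. apply eqN_sym. exact H2.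
    apply eqN_sum. apply eqN_sym; auto. apply eqN_refl; auto.
Qed.


Lemma leafOK_mono (V V' : vset) x : (forall z, V z -> V' z) -> leafOK V x -> leafOK V' x.
Proof. intros Hm (H1 & H2 & H3 & H4). split; [|split; [|split]]; auto. Qed.

Lemma Forall_scale {T} (Pr : R * T -> Prop) c l :
  (forall x, Pr x -> Pr (c * fst x, snd x)) -> Forall Pr l -> Forall Pr (scale c l).
Proof. intros Hm H. unfold scale. apply Forall_map. eapply Forall_impl; [|exact H]. auto. Qed.

Lemma Exists_scale {T} (Pr : R * T -> Prop) c l :
  (forall x, Pr x -> Pr (c * fst x, snd x)) -> Exists Pr l -> Exists Pr (scale c l).
Proof. intros Hm H. unfold scale. apply Exists_map. eapply Exists_impl; [|exact H]. auto. Qed.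

Lemma scale_nil {T} c (l : list (R*T)) : l <> [] -> scale c l <> [].
Proof. intros H Hc. unfold scale in Hc. apply map_eq_nil in Hc. auto. Qed.

Lemma case_psum p P Q V W U : MotP P V -> MotP Q W -> seteq U (fun z => V z \/ W z) ->
  MotP (PSum p P Q) U.
Proof.
  intros HP HQ HU [Hp [HwP HwQ]].
  destruct (HP HwP) as (l1 & n1 & p1 & s1 & e1 & f1 & c1).
  destruct (HQ HwQ) as (l2 & n2 & p2 & s2 & e2 & f2 & c2).
  exists (scale p l1 ++ scale (1 - p) l2).
  set (Dl := fun x : LT => Dirac (fst (snd x))).
  assert (Hm1 : forall c, map (fun x => (fst x, Dl x)) (scale c l1) = scale c (map (fun x => (fst x, Dl x)) l1))
    by (intros; apply map_scale; reflexivity).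
  assert (Hm2 : forall c, map (fun x => (fst x, Dl x)) (scale c l2) = scale c (map (fun x => (fst x, Dl x)) l2))
    by (intros; apply map_scale; reflexivity).
  assert (Hwl : forall l, Forall (leafOK V) l \/ Forall (leafOK W) l -> wfl (map (fun x => (fst x, Dl x)) l)).
  { intros l [Hl|Hl]; unfold wfl; apply Forall_map; eapply Forall_impl; try exact Hl;
    intros x (H1 & _); exact H1. }
  assert (HM1 : map (fun x => (fst x, Dl x)) l1 <> []) by (intro Hc; apply map_eq_nil in Hc; auto).
  assert (HM2 : map (fun x => (fst x, Dl x)) l2 <> []) by (intro Hc; apply map_eq_nil in Hc; auto).
  split; [|split; [|split; [|split; [|split]]]].
  - intro Hc. apply app_eq_nil in Hc. destruct Hc as [Hc _]. apply (scale_nil p l1); auto.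
  - apply posw_app; apply posw_scale; auto; lra.
  - rewrite sumw_app, !sumw_scale, s1, s2. ring.
  - eapply eqP_trans. apply eqP_psum; [lra|exact e1|exact e2].
    set (M1 := map (fun x : LT => (fst x, Dirac (fst (snd x)))) l1).
    set (M2 := map (fun x : LT => (fst x, Dirac (fst (snd x)))) l2).
    assert (Hr : map (fun x : LT => (fst x, Dirac (fst (snd x)))) (scale p l1 ++ scale (1 - p) l2)
                 = scale p M1 ++ scale (1 - p) M2).
    { rewrite map_app. f_equal; apply map_scale; reflexivity. }
    rewrite Hr.
    assert (HM1' : M1 <> []) by exact HM1. assert (HM2' : M2 <> []) by exact HM2.
    assert (HP1 : posw M1) by (apply posw_map; auto).
    assert (HP2 : posw M2) by (apply posw_map; auto).
    assert (HW1 : wfl M1) by (apply Hwl; auto).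
    assert (HW2 : wfl M2) by (apply Hwl; auto).
    rewrite <- (pb_scale p M1) by (auto; lra).
    rewrite <- (pb_scale (1 - p) M2) by (auto; lra).
    replace p with (sumw (scale p M1) / (sumw (scale p M1) + sumw (scale (1 - p) M2))) at 1.
    apply pb_concat.
    + apply scale_nil; auto.
    + apply scale_nil; auto.
    + apply posw_scale; auto; lra.
    + apply posw_scale; auto; lra.
    + apply wfl_scale; auto.
    + apply wfl_scale; auto.
    + rewrite !sumw_scale. unfold M1, M2. rewrite !sumw_map, s1, s2. field. lra.
  - apply Forall_app; split; apply Forall_scale; try (intros; exact H);
      eapply Forall_impl; try eassumption; intros x; apply leafOK_mono; intros z Hz; apply HU; auto.
  - intros z Hz. apply HU in Hz. apply Exists_app. destruct Hz as [Hz|Hz]; [left|right];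
      apply Exists_scale; auto.
Qed.

Lemma case_dirac E V : MotN E V -> MotP (Dirac E) V.
Proof.
  intros HE HwE. simpl in HwE.
  destruct (M_to_N E V HwE (HE HwE)) as (Q & HQ & HV & HN).
  exists [(1, (E, Q))]. split; [|split; [|split; [|split; [|split]]]].
  - congruence.
  - unfold posw; repeat constructor; simpl; lra.
  - unfold sumw; simpl; lra.
  - simpl. apply eqP_refl. exact HwE.
  - constructor; [|constructor]. unfold leafOK; simpl.
    split; [auto|split; [auto|split; [intros z Hz; apply HV; auto | auto]]].
  - intros z Hz. constructor. simpl. apply HV; auto.
Qed.

Lemma case_var X V : seteq V (fun z => z = X) -> MotN (Var X) V.
Proof.
  intros HV _. left. exists X. split; auto. apply eqN_sym, ax_N3. exact I.
Qed.

Lemma case_sumL E F V : MotN E V -> MotN (Sum E F) V.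
Proof.
  intros HE [HwE HwF]. destruct (HE HwE) as [(Z & HV & He)|(Q & HQ & HV & He)].
  - left. exists Z. split; auto. apply add_sumL; auto. exact I.
  - right. exists Q. split; auto. split; auto. apply add_sumL; auto. apply wfT; auto.
Qed.

Lemma case_sumR E F V : MotN F V -> MotN (Sum E F) V.
Proof.
  intros HE [HwE HwF]. destruct (HE HwF) as [(Z & HV & He)|(Q & HQ & HV & He)].
  - left. exists Z. split; auto. apply add_sumR; auto. exact I.
  - right. exists Q. split; auto. split; auto. apply add_sumR; auto. apply wfT; auto.
Qed.


Definition flatQ (l : list LT) : list (R * (nat * nexp A)) :=
  flat_map (fun x : LT => scale (fst x) (snd (snd x))) l.

Lemma flatQ_props (l : list LT) : posw l -> Forall (fun x : LT => validQ (snd (snd x))) l ->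
  (l <> [] -> flatQ l <> []) /\ posw (flatQ l) /\ sumw (flatQ l) = sumw l /\ wfQ (flatQ l).
Proof.
  induction l as [|x r IH]; intros Hp Hv.
  - unfold flatQ, posw, wfQ; simpl. repeat split; auto.
  - inversion Hp; inversion Hv; subst. destruct H5 as (Hn & Hpo & Hs & Hw).
    destruct (IH H2 H6) as (S4 & S2 & S1 & S3).
    unfold flatQ in *. simpl flat_map.
    split; [|split; [|split]].
    + intros _ Hc. apply app_eq_nil in Hc. destruct Hc as [Hc _]. apply (scale_nil (fst x) _ Hn Hc).
    + apply posw_app; auto. apply posw_scale; auto.
    + rewrite sumw_app, sumw_scale, S1, Hs. change (sumw (x :: r)) with (fst x + sumw r). ring.
    + apply wfQ_app; auto. unfold wfQ, scale. apply Forall_map. eapply Forall_impl; [|exact Hw]. auto.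
Qed.

Lemma flatQ_heads z (l : list LT) :
  headIn z (flatQ l) <-> Exists (fun x : LT => headIn z (snd (snd x))) l.
Proof.
  induction l as [|x r IH].
  - unfold flatQ, headIn; simpl. split; intro H; inversion H.
  - unfold flatQ in *. simpl flat_map. unfold headIn in *. rewrite Exists_app, Exists_cons.
    fold (headIn z (scale (fst x) (snd (snd x)))). rewrite headIn_scale. rewrite IH. reflexivity.
Qed.

Lemma flatQ_map (l : list LT) :
  flat_map (fun x => scale (fst x) (snd x))
    (map (fun x : LT => (fst x, map (fun y => (fst y, mkQ y)) (snd (snd x)))) l)
  = map (fun y => (fst y, mkQ y)) (flatQ l).
Proof.
  induction l as [|x r IH]; [reflexivity|].
  unfold flatQ in *. simpl. rewrite IH, map_app. f_equal.
  unfold scale. rewrite !map_map. reflexivity.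
Qed.

Lemma case_tau P V : MotP P V -> MotN (Pre tau P) V.
Proof.
  intros HP HwP. simpl in HwP. destruct (HP HwP) as (l & n & pw & s & e & f & c).
  assert (Hv : Forall (fun x : LT => validQ (snd (snd x))) l).
  { eapply Forall_impl; [|exact f]. intros x (_ & H & _); exact H. }
  destruct (flatQ_props l pw Hv) as (F1 & F2 & F3 & F4).
  assert (HvQ : validQ (flatQ l)) by (split; auto; split; auto; split; auto; rewrite F3; auto).
  right. exists (flatQ l). split; [exact HvQ|split].
  - intros z. rewrite flatQ_heads. split.
    + apply c.
    + intros Hz. apply Exists_exists in Hz. destruct Hz as (x & Hx & Hz).
      rewrite Forall_forall in f. destruct (f x Hx) as (_ & _ & H & _). auto.
  - rewrite Forall_forall in f.
    assert (Hwe : forall x, In x l -> wfN (fst (snd x))) by (intros x Hx; apply (f x Hx)).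
    pose proof (T1all tau (fun x : LT => fst (snd x)) l [] ) as HB.
    rewrite app_nil_r in HB. simpl app in HB.
    assert (HB' : eqN tau (Pre tau (pb (map (fun x : LT => (fst x, Dirac (fst (snd x)))) l)))
                      (Pre tau (pb (map (fun x : LT => (fst x, Dirac (preE tau (fst (snd x))))) l)))).
    { apply HB; auto. intro Hc; apply map_eq_nil in Hc; auto. constructor. constructor. }
    clear HB.
    assert (HC : eqP tau (pb (map (fun x : LT => (fst x, Dirac (preE tau (fst (snd x))))) l))
                         (pb (map (fun x : LT => (fst x, Dirac (Sum (preE tau (fst (snd x)))
                                                      (Pre tau (pbQ (snd (snd x))))))) l))).
    { apply (pb_map_cong l (fun x : LT => Dirac (preE tau (fst (snd x))))
               (fun x : LT => Dirac (Sum (preE tau (fst (snd x))) (Pre tau (pbQ (snd (snd x))))))); auto.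
      intros x Hx. apply eqP_dirac. destruct (f x Hx) as (_ & _ & _ & H). exact H. }
    set (l4 := map (fun x : LT => (fst x, (preE tau (fst (snd x)), pbQ (snd (snd x))))) l).
    pose proof (ax_T4 tau tau (l := l4)) as H4.
    assert (Em1 : map (fun x : R * (nexp A * pexp A) => (fst x, Dirac (Sum (fst (snd x)) (Pre tau (snd (snd x)))))) l4
                  = map (fun x : LT => (fst x, Dirac (Sum (preE tau (fst (snd x))) (Pre tau (pbQ (snd (snd x))))))) l)
      by (unfold l4; rewrite map_map; reflexivity).
    assert (Em2 : map (fun x : R * (nexp A * pexp A) => (fst x, snd (snd x))) l4
                  = map (fun x : LT => (fst x, pbQ (snd (snd x)))) l)
      by (unfold l4; rewrite map_map; reflexivity).
    rewrite Em1, Em2 in H4.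
    rewrite !pbig_pb in H4 by (rewrite (sumw_map (fun x : LT => _)); auto).
    assert (H4' : eqN tau
      (Sum (Pre tau (pb (map (fun x : LT => (fst x, Dirac (Sum (preE tau (fst (snd x))) (Pre tau (pbQ (snd (snd x))))))) l)))
           (Pre tau (pb (map (fun x : LT => (fst x, pbQ (snd (snd x)))) l))))
      (Pre tau (pb (map (fun x : LT => (fst x, Dirac (Sum (preE tau (fst (snd x))) (Pre tau (pbQ (snd (snd x))))))) l)))).
    { apply H4.
      - unfold Defs.dist. split; [|split].
        + unfold l4; intro Hc; apply map_eq_nil in Hc; auto.
        + apply (posw_map (fun x : LT => (preE tau (fst (snd x)), pbQ (snd (snd x)))) l pw).
        + change (sumw l4 = 1). unfold l4. rewrite (sumw_map (fun x : LT => _)). auto.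
      - unfold l4. apply Forall_map. apply Forall_forall. intros x Hx. simpl.
        destruct (f x Hx) as (Hw & (Qn & Qp & _ & Qw) & _). split; auto. apply wfP_pbQ; auto. }
    clear H4.
    assert (HE : eqP tau (pb (map (fun x : LT => (fst x, pbQ (snd (snd x)))) l)) (pbQ (flatQ l))).
    { set (lN := map (fun x : LT => (fst x, map (fun y => (fst y, mkQ y)) (snd (snd x)))) l).
      assert (Hl1 : map (fun x : LT => (fst x, pbQ (snd (snd x)))) l = map (fun x => (fst x, pb (snd x))) lN)
        by (unfold lN; rewrite map_map; reflexivity).
      rewrite Hl1. unfold pbQ. rewrite <- flatQ_map. fold lN.
      apply pb_nested.
      - unfold lN; intro Hc; apply map_eq_nil in Hc; auto.
      - unfold lN. apply (posw_map (fun x : LT => _) l pw).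
      - unfold lN. apply Forall_map. apply Forall_forall. intros x Hx. simpl.
        destruct (f x Hx) as (_ & (Qn & Qp & Qs & Qw) & _).
        split; [|split; [|split]].
        + intro Hc; apply map_eq_nil in Hc; auto.
        + apply posw_map; auto.
        + rewrite (sumw_map (fun y => mkQ y)); auto.
        + apply wfl_mapQ; auto. }
    set (X4 := pb (map (fun x : LT => (fst x, Dirac (Sum (preE tau (fst (snd x))) (Pre tau (pbQ (snd (snd x))))))) l)) in *.
    assert (HPX : eqN tau (Pre tau P) (Pre tau X4)).
    { eapply eqN_trans. apply eqN_pre. exact e.
      eapply eqN_trans. exact HB'. apply eqN_pre. exact HC. }
    eapply eqN_trans. exact HPX.
    eapply eqN_trans. apply eqN_sym. exact H4'.
    apply eqN_sum. apply eqN_sym. exact HPX.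
    apply eqN_pre. exact HE.
Qed.


Lemma unfold_ren Y (B0 : nexp A) : wfN B0 ->
  wfN (renN (allvN B0) B0) /\
  eqN tau (Rec Y B0) (substN (renN (allvN B0) B0) Y (Rec Y (renN (allvN B0) B0))).
Proof.
  intros HB0. destruct (proj1 ren_props B0 (allvN B0) HB0) as (W1 & W2 & W3 & W4).
  split; auto.
  eapply eqN_trans. apply eqN_rec, W2.
  apply ax_R1; auto.
  apply (proj1 ok_of_bv). intros y Hy Hf. simpl in Hf.
  apply (W3 y Hy). apply (proj1 free_allv). apply W4. tauto.
Qed.

Lemma headIn_filter z Y Q : headIn z (filter (nonYb Y) Q) <-> headIn z Q /\ z <> Y.
Proof.
  unfold headIn. rewrite !Exists_exists. split.
  - intros (x & Hx & Hz). apply filter_In in Hx. destruct Hx as [Hx Hn].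
    unfold nonYb in Hn. apply Bool.negb_true_iff, Nat.eqb_neq in Hn.
    split; [exists x; auto | congruence].
  - intros [(x & Hx & Hz) HzY]. exists x. split; auto. apply filter_In. split; auto.
    unfold nonYb. apply Bool.negb_true_iff, Nat.eqb_neq. congruence.
Qed.

Lemma Forall_filter' {T} (Pr : T -> Prop) f l : Forall Pr l -> Forall Pr (filter f l).
Proof.
  intros H. apply Forall_forall. intros x Hx. apply filter_In in Hx.
  rewrite Forall_forall in H. apply H; tauto.
Qed.

Lemma case_rec Y E V V' : MotN E V -> ~ seteq V (fun z => z = Y) ->
  seteq V' (fun z => V z /\ z <> Y) -> MotN (Rec Y E) V'.
Proof.
  intros HM HnY HV' HwE. simpl in HwE.
  destruct (HM HwE) as [(Z & HVZ & He)|(Q & HQ & HV & He)].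
  - assert (HZY : Z <> Y) by (intro; subst; apply HnY; exact HVZ).
    left. exists Z. split.
    { intro z. rewrite (HV' z), (HVZ z). split; [tauto | intros ->; split; auto]. }
    set (B0 := Sum E (Var Z)).
    assert (HB0 : wfN B0) by (split; auto; exact I).
    destruct (unfold_ren Y B0 HB0) as (Hw3 & Hu).
    set (S := allvN B0) in *.
    set (G := Rec Y (renN S B0)) in *.
    assert (Hs : substN (renN S B0) Y G = Sum (substN (renN S E) Y G) (Var Z)).
    { change (renN S B0) with (Sum (renN S E) (Var Z)) at 1. cbn [substN].
      destruct (Nat.eqb Y Z) eqn:H; [apply Nat.eqb_eq in H; congruence | reflexivity]. }
    rewrite Hs in Hu.
    assert (HwG : wfN G) by exact Hw3.
    assert (HwK : wfN (substN (renN S E) Y G)).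
    { apply (proj1 wf_subst); auto. change (renN S B0) with (Sum (renN S E) (Var Z)) in Hw3.
      destruct Hw3; auto. }
    apply (absorb _ (substN (renN S E) Y G) (Var Z)); auto; [|exact I].
    eapply eqN_trans. apply eqN_rec. exact He. exact Hu.
  - destruct HQ as (Qn0 & Qp & Qs & Qw).
    set (Qf := filter (nonYb Y) Q).
    assert (HQf : Qf <> []).
    { intro Hf. apply HnY. intro z. rewrite (HV z). split.
      - intros Hz. destruct (classic (z = Y)) as [|Hzy]; auto.
        assert (Hh : headIn z Qf) by (apply headIn_filter; auto). rewrite Hf in Hh. inversion Hh.
      - intros ->. destruct Q as [|x Q']; [congruence|].
        destruct (classic (fst (snd x) = Y)) as [Hx|Hx].
        + constructor 1. auto.
        + exfalso. assert (Hh : headIn (fst (snd x)) Qf).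
          { apply headIn_filter. split; auto. constructor 1. reflexivity. }
          rewrite Hf in Hh. inversion Hh. }
    assert (Hpf : posw Qf) by (apply Forall_filter'; auto).
    assert (Hwf : wfQ Qf) by (apply Forall_filter'; auto).
    assert (Hsf : 0 < sumw Qf) by (apply sumw_pos; auto).
    set (T := Pre tau (pbQ Q)).
    assert (HT : wfN T) by (apply wfT; split; auto).
    assert (H1 : eqN tau (Rec Y E) (Rec Y (Sum T E))).
    { apply eqN_rec. eapply eqN_trans. exact He. apply ax_N1; auto. }
    destruct (prune Y Q [] E) as (B' & HB' & Hp); rewrite ?app_nil_r; auto.
    rewrite app_nil_r in Hp. simpl app in Hp.
    set (c := / sumw Qf).
    assert (Hc : 0 < c) by (apply Rinv_0_lt_compat; auto).
    set (Qn := scale c Qf).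
    assert (HQn : pbQ Qf = pbQ Qn).
    { unfold pbQ, Qn. rewrite map_scale by reflexivity. rewrite pb_scale; auto.
      apply posw_map; auto. }
    assert (Hnn : Qn <> []) by (apply scale_nil; auto).
    assert (Hpn : posw Qn) by (apply posw_scale; auto).
    assert (Hsn : sumw Qn = 1) by (unfold Qn, c; rewrite sumw_scale; field; lra).
    assert (Hwn : wfQ Qn) by (unfold wfQ, Qn, scale; apply Forall_map; eapply Forall_impl; [|exact Hwf]; auto).
    assert (HnY' : forall x, In x Qn -> fst (snd x) <> Y).
    { intros x Hx. unfold Qn, scale in Hx. apply in_map_iff in Hx. destruct Hx as (y & <- & Hy).
      apply filter_In in Hy. destruct Hy as [_ Hy]. unfold nonYb in Hy.
      apply Bool.negb_true_iff, Nat.eqb_neq in Hy. simpl. auto. }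
    set (B0 := Sum (Pre tau (pbQ Qn)) B').
    assert (HB0 : wfN B0) by (split; auto; simpl; apply wfP_pbQ; auto).
    destruct (unfold_ren Y B0 HB0) as (Hw3 & Hu).
    destruct (proj2 ren_props (pbQ Qn) (allvN B0)) as (_ & _ & _ & _); [simpl; apply wfP_pbQ; auto|].
    set (S := allvN B0) in *.
    set (G := Rec Y (renN S B0)) in *.
    assert (HwG : wfN G) by exact Hw3.
    set (Q' := map (fun x : R * (nat * nexp A) => (fst x, (fst (snd x), substN (renN S (snd (snd x))) Y G))) Qn).
    assert (Hs : substN (renN S B0) Y G = Sum (Pre tau (pbQ Q')) (substN (renN S B') Y G)).
    { change (renN S B0) with (Sum (Pre tau (renP S (pbQ Qn))) (renN S B')) at 1. cbn [substN].
      f_equal. f_equal. unfold pbQ.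
      assert (Hm : map (fun x => (fst x, mkQ x)) Qn <> []) by (intro Hx; apply map_eq_nil in Hx; auto).
      rewrite (pb_hom (renP S)) by (auto; reflexivity).
      rewrite map_map.
      rewrite (pb_hom (fun P => substP P Y G)) by (try reflexivity; intro Hx; apply map_eq_nil in Hx; auto).
      rewrite map_map. unfold Q'. rewrite map_map. f_equal.
      apply map_ext_in. intros x Hx. simpl.
      assert (Hb : Nat.eqb Y (fst (snd x)) = false) by (apply Nat.eqb_neq; intro; apply (HnY' x Hx); auto).
      rewrite Hb. reflexivity. }
    rewrite Hs in Hu.
    assert (HwB'r : wfN (renN S B')) by (apply (proj1 ren_props); auto).
    assert (HwK : wfN (substN (renN S B') Y G)) by (apply (proj1 wf_subst); auto).
    assert (HvQ' : validQ Q').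
    { split; [|split; [|split]].
      - unfold Q'; intro Hx; apply map_eq_nil in Hx; auto.
      - unfold Q'. apply (posw_map (fun x : R * (nat * nexp A) => (fst (snd x), _)) Qn Hpn).
      - unfold Q'. rewrite (sumw_map (fun x : R * (nat * nexp A) => (fst (snd x), _))). auto.
      - unfold Q', wfQ. apply Forall_map. apply Forall_forall. intros x Hx. simpl.
        apply (proj1 wf_subst); auto. apply (proj1 ren_props).
        unfold wfQ in Hwn. rewrite Forall_forall in Hwn. apply Hwn; auto. }
    right. exists Q'. split; [exact HvQ'|split].
    + intros z. rewrite (HV' z), (HV z). unfold Q'. rewrite headIn_map. unfold Qn.
      rewrite headIn_scale. unfold Qf. rewrite headIn_filter. reflexivity.
    + apply (absorb _ (substN (renN S B') Y G) (Pre tau (pbQ Q'))); auto; [|apply wfT; auto].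
      eapply eqN_trans. exact H1.
      eapply eqN_trans. exact Hp.
      fold Qf. rewrite HQn. fold B0.
      eapply eqN_trans. exact Hu.
      apply ax_N1; auto. apply wfT; auto.
Qed.


Lemma main_ind :
  forall E V, ugN tau E V -> MotN E V.
Proof.

  apply (ugN_ind2 A tau MotN MotP).
  - intros. apply case_var; auto.
  - intros. apply case_tau; auto.
  - intros. eapply case_rec; eauto.
  - intros. apply case_sumL; auto.
  - intros. apply case_sumR; auto.
  - intros. apply case_dirac; auto.
  - intros. eapply case_psum; eauto.
Qed.

Lemma final (E : nexp A) (X : nat) :
  wfN E -> ugN tau E (fun z => z = X) -> eqN tau E (Sum E (Var X)).
Proof.
  intros HwE Hug.
  destruct (main_ind E _ Hug HwE) as [(Z & HV & He)|(Q & HQ & HV & He)].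
  - assert (X = Z) by (apply (HV X); reflexivity). subst. exact He.
  - destruct HQ as (Qn & Qp & Qs & Qw).
    assert (Hh : forall x, In x Q -> fst (snd x) = X).
    { intros x Hx. apply (HV (fst (snd x))). unfold headIn. apply Exists_exists. exists x; auto. }
    set (T := Pre tau (pbQ Q)).
    assert (HT : wfN T) by (apply wfT; split; auto).
    set (lT := map (fun x : R * (nat * nexp A) => (fst x, snd (snd x))) Q).
    pose proof (ax_T2 tau (l := lT) (Var X)) as H2.
    assert (Em : map (fun x : R * nexp A => (fst x, Dirac (Sum (snd x) (Var X)))) lT =
                 map (fun x : R * (nat * nexp A) => (fst x, Dirac (Sum (snd (snd x)) (Var X)))) Q)
      by (unfold lT; rewrite map_map; reflexivity).
    rewrite Em in H2.
    rewrite pbig_pb in H2 by (rewrite (sumw_map (fun x : R * (nat * nexp A) => _)); auto).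
    assert (HP : eqP tau (pbQ Q) (pb (map (fun x : R * (nat * nexp A) => (fst x, Dirac (Sum (snd (snd x)) (Var X)))) Q))).
    { unfold pbQ. apply (pb_map_cong Q); auto.
      intros x Hx. unfold mkQ. rewrite (Hh x Hx). apply eqP_dirac, ax_N1; [exact I|].
      unfold wfQ in Qw. rewrite Forall_forall in Qw. apply Qw; auto. }
    assert (HT2 : eqN tau (Sum T (Var X)) T).
    { eapply eqN_trans. apply eqN_sum. apply eqN_pre. exact HP. apply eqN_refl; exact I.
      eapply eqN_trans. apply H2.
      - unfold Defs.dist. split; [|split].
        + unfold lT; intro Hc; apply map_eq_nil in Hc; auto.
        + apply (posw_map (fun x : R * (nat * nexp A) => snd (snd x)) Q Qp).
        + change (sumw lT = 1). unfold lT. rewrite (sumw_map (fun x : R * (nat * nexp A) => _)). auto.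
      - unfold lT. apply Forall_map. exact Qw.
      - exact I.
      - apply eqN_pre. apply eqP_sym. exact HP. }
    eapply eqN_trans. exact He.
    eapply eqN_trans. apply eqN_sum. apply eqN_refl; auto. apply eqN_sym. exact HT2.
    eapply eqN_trans. apply ax_N2; auto. exact I.
    apply eqN_sum. apply eqN_sym. exact He. apply eqN_refl. exact I.
Qed.

End Gen.

Theorem mainTheorem8 (A : Type) (tau : A) (E : nexp A) (X : nat) :
  wfN E -> ugN tau E (fun z => z = X) -> eqN tau E (Sum E (Var X)).
Proof. exact (final A tau E X). Qed.
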